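(* Let $\mathcal{R}$ be a commutative, associative real algebra with unit, $l\ge1$, and $m_1,\ldots,m_l$ positive integers. Let $A_1,\ldots,A_l\in M^{\infty\times\infty}_0(\mathcal{R}[e^{t_1},\ldots,e^{t_{l+1}}])$ satisfy: a) $A_iA_j=A_jA_i$ for all $i,j$; b) $\partial_iA_j=\partial_jA_i$ for $1\le i,j\le l$ (with $\partial_i$ applied entrywise); c) for each $i$, $A_i=A_i'+A_i''$, where $A_i'$ is strictly lower triangular and each of its entries is a linear combination of monomials $e^{td}$, $d=(d_1,\ldots,d_{l+1})\ge0$, with $d_i-m_id_{l+1}\ne0$, and $A_i''$ is strictly upper triangular with entries in $\mathcal{R}$ (independent of $t$). Consider the system $( * )$: $\partial_ig=A_ig$, $1\le i\le l$, for $g=\sum_{d\ge0}g_d(t_1,\ldots,t_l)e^{td}\in\mathcal{R}^\infty_0[t_1,\ldots,t_l][[e^{t_1},\ldots,e^{t_{l+1}}]]$. Then the solutions of $( * )$ are uniquely determined by the constant terms $g_d^0\in\mathcal{R}^\infty_0$ of those $g_d$ with $d_1=m_1d_{l+1},\ldots,d_l=m_ld_{l+1}$. More precisely, solutions satisfy recurrence relations $$g_d=\begin{cases}G_d(g_d^0,\ g_{d'}\mid d'<d)&\text{if } d_i=m_id_{l+1}\text{ for all }1\le i\le l,\\ G_d(g_{d'}\mid d'<d)&\text{otherwise,}\end{cases}$$ where $d'<d$ means $d'\le d$ componentwise and $d'\ne d$, and each $G_d$ is $\mathcal{R}$-linear in coefficients: every coefficient of the polynomial $g_d$ is of the form $C_0g_d^0+\sum_jC_jv_j$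 (first case) or $\sum_jC_jv_j$ (second case), with $C_j\in M^{\infty\times\infty}_0(\mathcal{R})$ and $v_j\in\mathcal{R}^\infty_0$ coefficients of polynomials $g_{d'}$ with $d'<d$.
   Context: $\mathcal{R}^\infty_0$ denotes sequences (indexed by positive integers) in $\mathcal{R}$ with finite support; for a ring $\mathcal{S}$, $M^{\infty\times\infty}_0(\mathcal{S})$ denotes infinite matrices indexed by positive integers each of whose columns has finitely many nonzero entries (acting on finitely supported sequences). $e^{td}=e^{t_1d_1}\cdots e^{t_{l+1}d_{l+1}}$, and the $e^{t_j}$ are treated as formal multiplicative variables. The operator $\partial_i$ ($1\le i\le l$) is $\mathcal{R}$-linear and defined by $\partial_i(ge^{td})=\frac{\partial g}{\partial t_i}e^{td}+(d_i-m_id_{l+1})ge^{td}$ for $g$ polynomial in $t_1,\ldots,t_l$. *)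

(* Defs.v *)
From HB Require Import structures.
From mathcomp Require Import all_boot all_order all_algebra.
From mathcomp Require Import boolp classical_sets functions cardinality fsbigop reals.
Set Implicit Arguments. Unset Strict Implicit. Unset Printing Implicit Defensive.
Import Order.TTheory GRing.Theory Num.Theory.
Local Open Scope classical_set_scope.
Local Open Scope ring_scope.

(* Conventions.
   - Positive-integer indices 1,2,3,... of sequences / infinite matrices are
     represented by nat 0,1,2,... (shift by one).
   - R^oo_0 : functions nat -> R with finite support.
   - M_0^{oo x oo}(S) : functions nat -> nat -> S (row, column) with every
     column finitely supported.
   - Exponent vectors d = (d_1,...,d_{l+1}) : {ffun 'I_l.+1 -> nat}, where
     d_{l+1} is the entry at ord_max and d_i (1<=i<=l) is at widen i.
   - Elements of R[e^{t_1},...,e^{t_{l+1}}] : coefficient functions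
     (exponent -> R) with finite support (coefficient of e^{td}).
   - Elements of R^oo_0[t_1..t_l][[e^{t_1},..,e^{t_{l+1}}]] : functions
     g : expo l.+1 -> expo l -> nat -> R; g d k p is the p-th entry of the
     coefficient of t^k in g_d. *)

Definition expo (n : nat) := {ffun 'I_n -> nat}.
Definition expo0 (n : nat) : expo n := [ffun=> 0%N].
Definition expo_le (n : nat) (d' d : expo n) : bool := [forall i, (d' i <= d i)%N].
Definition expo_lt (n : nat) (d' d : expo n) : bool := expo_le d' d && (d' != d).
Definition expo_sub (n : nat) (d d' : expo n) : expo n := [ffun i => (d i - d' i)%N].
Definition expo_incr (n : nat) (k : expo n) (i : 'I_n) : expo n :=
  [ffun j => (k j + (j == i))%N].

Definition iwiden (l : nat) (i : 'I_l) : 'I_l.+1 := widen_ord (leqnSn l) i.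

Definition wt (R : ringType) (l : nat) (m : 'I_l -> nat) (i : 'I_l) (d : expo l.+1) : R :=
  ((d (iwiden i))%:Z - (m i * d ord_max)%N%:Z)%:~R.

Definition on_diag (l : nat) (m : 'I_l -> nat) (d : expo l.+1) : bool :=
  [forall i : 'I_l, d (iwiden i) == (m i * d ord_max)%N].

Definition fin_vec (R : nmodType) (v : nat -> R) : Prop :=
  exists N, forall p, (N <= p)%N -> v p = 0.

Definition colfin_mx (R : nmodType) (C : nat -> nat -> R) : Prop :=
  forall q, fin_vec (fun p => C p q).

Definition is_epoly (R : nmodType) (n : nat) (a : expo n -> R) : Prop :=
  finite_set [set d | a d != 0].

Definition epoly_mx (R : nmodType) (n : nat) (A : nat -> nat -> expo n -> R) : Prop :=
  (forall p q, is_epoly (A p q)) /\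
  (forall q, exists N, forall p, (N <= p)%N -> forall d, A p q d = 0).

Definition mxv (R : ringType) (C : nat -> nat -> R) (v : nat -> R) (p : nat) : R :=
  \sum_(q \in [set: nat]) (C p q * v q).

Definition emul (R : ringType) (n : nat) (a b : expo n -> R) (d : expo n) : R :=
  \sum_(d' \in [set d' : expo n | expo_le d' d]) (a d' * b (expo_sub d d')).

Definition emx_mul (R : ringType) (n : nat) (A B : nat -> nat -> expo n -> R)
    (p r : nat) (d : expo n) : R :=
  \sum_(q \in [set: nat]) emul (A p q) (B q r) d.

(* entrywise partial_i of a matrix with entries in R[e^t] (no t-dependence) *)
Definition dmx (R : ringType) (l : nat) (m : 'I_l -> nat) (i : 'I_l)
    (A : nat -> nat -> expo l.+1 -> R) (p q : nat) (d : expo l.+1) : R :=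
  wt R m i d * A p q d.

Definition is_series (R : nmodType) (l : nat) (g : expo l.+1 -> expo l -> nat -> R) : Prop :=
  forall d, finite_set [set k | exists p, g d k p != 0] /\
            forall k, fin_vec (g d k).

Definition dser (R : ringType) (l : nat) (m : 'I_l -> nat) (i : 'I_l)
    (g : expo l.+1 -> expo l -> nat -> R) (d : expo l.+1) (k : expo l) (p : nat) : R :=
  (k i).+1%:R * g d (expo_incr k i) p + wt R m i d * g d k p.

Definition mxser (R : ringType) (l : nat) (A : nat -> nat -> expo l.+1 -> R)
    (g : expo l.+1 -> expo l -> nat -> R) (d : expo l.+1) (k : expo l) (p : nat) : R :=
  \sum_(q \in [set: nat])
    \sum_(d' \in [set d' : expo l.+1 | expo_le d' d]) (A p q d' * g (expo_sub d d') k q).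

Definition is_solution (R : ringType) (l : nat) (m : 'I_l -> nat)
    (A : 'I_l -> nat -> nat -> expo l.+1 -> R) (g : expo l.+1 -> expo l -> nat -> R) : Prop :=
  is_series g /\ forall i d k p, dser m i g d k p = mxser (A i) g d k p.

(* Main.v *)
Require Import Defs.
From HB Require Import structures.
From mathcomp Require Import all_boot all_order all_algebra.
From mathcomp Require Import boolp classical_sets functions cardinality fsbigop reals.
From mathcomp Require Import zify ring.
Import Order.TTheory GRing.Theory Num.Theory.
Local Open Scope classical_set_scope.
Local Open Scope ring_scope.

Module Aux.
Set Implicit Arguments. Unset Strict Implicit. Unset Printing Implicit Defensive.

Lemma fsum_bound (R : nmodType) (f : nat -> R) n :
  (forall q, (n <= q)%N -> f q = 0) ->
  \sum_(q \in [set: nat]) f q = \sum_(q < n) f q.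
Proof.
move=> fn; rewrite fsbig_ord; apply/esym/fsbig_widen => // q [_ /=].
move=> /negP; rewrite -leqNgt; exact: fn.
Qed.

Lemma fsum_single (R : nmodType) (f : nat -> R) n :
  (forall q, q != n -> f q = 0) ->
  \sum_(q \in [set: nat]) f q = f n.
Proof.
move=> fn; rewrite -(fsbig_widen [set n] [set: nat]) ?fsbig_set1 // => q [_ /=].
by move=> /eqP qn; apply: fn.
Qed.

Lemma finite_bound (T : eqType) (D : set T) (P : T -> nat -> Prop) :
  finite_set D -> (forall x n n', (n <= n')%N -> P x n -> P x n') ->
  (forall x, D x -> exists n, P x n) -> exists n, forall x, D x -> P x n.
Proof.
move=> /finite_seqP[s ->] Pmon HP.
elim: s HP => [|a s IH] HP; first by exists 0%N.
have [n1 Hn1] := HP a (mem_head a s).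
have [|n2 Hn2] := IH; first by move=> x xs; apply: HP; rewrite /= inE xs orbT.
exists (maxn n1 n2) => x; rewrite /= inE => /orP[/eqP->|xs].
  by apply: Pmon Hn1; rewrite leq_maxl.
by apply: Pmon (Hn2 x xs); rewrite leq_maxr.
Qed.

Definition deg n (k : expo n) : nat := (\sum_(i < n) k i)%N.

Lemma fin_le n (d : expo n) : finite_set [set d' : expo n | expo_le d' d].
Proof.
pose b := (\max_(i < n) d i).+1.
pose phi (f : {ffun 'I_n -> 'I_b}) : expo n := [ffun i => val (f i)].
apply: (sub_finite_set (B := phi @` [set: {ffun 'I_n -> 'I_b}])).
  move=> d' /= /forallP led; exists [ffun i => inord (d' i)] => //.
  apply/ffunP => i; rewrite !ffunE /= inordK // ltnS.
  by apply: leq_trans (led i) _; apply: (leq_bigmax i).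
by apply: finite_image; apply: finite_finset.
Qed.

Section Main.
Variables (F : realType) (R : comAlgType F) (l : nat) (m : 'I_l -> nat)
  (A : 'I_l -> nat -> nat -> expo l.+1 -> R).
Hypothesis Aep : forall i, epoly_mx (A i).
Hypothesis Nup : forall i p q, (q <= p)%N -> A i p q (expo0 l.+1) = 0.

Definition findata (x : expo l.+1 -> nat -> R) := forall e, fin_vec (x e).
Definition lin (a : R) (x y : expo l.+1 -> nat -> R) : expo l.+1 -> nat -> R :=
  fun e p => a * x e p + y e p.

Lemma fin_lin (a : R) (u v : nat -> R) : fin_vec u -> fin_vec v ->
  fin_vec (fun p => a * u p + v p).
Proof.
move=> [n1 H1] [n2 H2]; exists (maxn n1 n2) => p; rewrite geq_max => /andP[p1 p2].
by rewrite H1 // H2 // mulr0 addr0.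
Qed.

Lemma findata_lin a x y : findata x -> findata y -> findata (lin a x y).
Proof. by move=> hx hy e; apply: fin_lin. Qed.

Definition Nv (i : 'I_l) (v : nat -> R) (p : nat) : R :=
  \sum_(q \in [set: nat]) A i p q (expo0 l.+1) * v q.

Lemma Nv_supp i v n : (forall q, (n <= q)%N -> v q = 0) ->
  forall p, (n <= p.+1)%N -> Nv i v p = 0.
Proof.
move=> hv p hp; rewrite /Nv (fsum_bound (n:=n)) => [|q hq]; last by rewrite hv // mulr0.
rewrite big1 // => q _; rewrite Nup ?mul0r //.
by rewrite -ltnS; apply: leq_trans hp.
Qed.

Lemma Nv_fin i v : fin_vec v -> fin_vec (Nv i v).
Proof. by move=> [n hn]; exists n => p hp; apply: (@Nv_supp i v n hn); apply: leqW. Qed.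

Lemma Nv_lin i (a : R) u v p : fin_vec u -> fin_vec v ->
  Nv i (fun q => a * u q + v q) p = a * Nv i u p + Nv i v p.
Proof.
move=> [n1 H1] [n2 H2]; set n := maxn n1 n2.
have h1 q : (n <= q)%N -> u q = 0 by rewrite geq_max => /andP[] /H1.
have h2 q : (n <= q)%N -> v q = 0 by rewrite geq_max => /andP[] _ /H2.
rewrite /Nv !(fsum_bound (n:=n)); first last; try (move=> q hq; rewrite ?h1 ?h2 ?mulr0 ?addr0 ?mulr0 //; fail).
rewrite mulr_sumr -big_split; apply: eq_bigr => q _.
by rewrite mulrDr mulrCA.
Qed.

Lemma Nv_single i n (b : R) p :
  Nv i (fun q => if q == n then b else 0) p = A i p n (expo0 l.+1) * b.
Proof.
by rewrite /Nv (fsum_single (n := n)) ?eqxx // => q /negPf ->; rewrite mulr0.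
Qed.

Lemma colbound B : exists M, forall i q p d, (q < B)%N -> (M <= p)%N -> A i p q d = 0.
Proof.
elim: B => [|B [M HM]]; first by exists 0%N.
have [M' HM'] : exists n, forall i, [set: 'I_l] i ->
    forall p d, (n <= p)%N -> A i p B d = 0.
  apply: (@finite_bound _ _ (fun i n => forall p d, (n <= p)%N -> A i p B d = 0)).
    exact: finite_finset.
    by move=> i n n' nn' H p d hp; apply: H; apply: leq_trans nn' hp.
  move=> i _; have [N HN] := (Aep i).2 B; by exists N => p d hp; apply: HN.
exists (maxn M M') => i q p d; rewrite ltnS leq_eqVlt geq_max => /orP[/eqP->|qB] /andP[h1 h2].
  exact: HM'.
exact: HM.
Qed.

Lemma natR (n : nat) (v : R) : n%:R * v = (n%:R : F) *: v.
Proof. by rewrite mulr_natl scaler_nat. Qed.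

Lemma nat_inv (n : nat) (v : R) : (0 < n)%N -> ((n%:R : F)^-1) *: (n%:R * v) = v.
Proof.
move=> n0; rewrite natR scalerA mulVf ?scale1r //.
by rewrite pnatr_eq0 -lt0n.
Qed.

Lemma intR (z : int) (v : R) : z%:~R * v = (z%:~R : F) *: v.
Proof. by rewrite mulrzl scaler_int. Qed.

Lemma int_inv (z : int) : z != 0 -> exists c : R, z%:~R * c = 1.
Proof.
move=> z0; exists ((z%:~R : F)^-1 *: 1).
rewrite intR scalerA mulfV ?scale1r //.
by rewrite intr_eq0.
Qed.

Lemma int_reg (z : int) (v : R) : z != 0 -> z%:~R * v = 0 -> v = 0.
Proof.
move=> z0 h; have [c hc] := int_inv z0.
by rewrite -[v]mul1r -hc mulrAC h mul0r.
Qed.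


Section Solve.
Variables (i : 'I_l) (z : int).
Hypothesis z0 : z != 0.

Lemma top_zero (v : nat -> R) n : fin_vec v ->
  (forall p, (n <= p)%N -> z%:~R * v p - Nv i v p = 0) ->
  forall p, (n <= p)%N -> v p = 0.
Proof.
move=> [M HM] H; elim: M HM => [|M IH] HM; first by move=> p _; apply: HM.
case: (ltnP M n) => Mn.
  by move=> p np; apply: HM; apply: leq_trans np.
apply: IH => p; rewrite leq_eqVlt => /orP[/eqP<-|]; last exact: HM.
have := H M Mn; rewrite (@Nv_supp i v M.+1 HM M) // subr0.
exact: int_reg.
Qed.

Lemma solve n (u : nat -> R) : (forall p, (n <= p)%N -> u p = 0) ->
  exists v : nat -> R, (forall p, (n <= p)%N -> v p = 0) /\
    forall p, z%:~R * v p - Nv i v p = u p.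
Proof.
elim: n u => [|n IH] u hu.
  exists (fun _ => 0); split => // p.
  by rewrite mulr0 (@Nv_supp i _ 0) // ?sub0r ?oppr0 ?hu.
have [c hc] := int_inv z0.
pose b := c * u n.
pose e := fun q : nat => if q == n then b else 0.
have Ne p : Nv i e p = A i p n (expo0 l.+1) * b by apply: Nv_single.
pose u2 := fun p => u p - (z%:~R * e p - Nv i e p).
have [|v [hv1 hv2]] := IH u2.
  move=> p; rewrite leq_eqVlt => /orP[/eqP<-|np].
    by rewrite /u2 Ne /e eqxx Nup // mul0r subr0 /b mulrA hc mul1r subrr.
  rewrite /u2 Ne /e (gtn_eqF np) Nup ?mul0r ?mulr0 ?subrr ?subr0 ?hu //.
  exact: ltnW.
exists (fun p => 1 * v p + e p); split.
  move=> p np; rewrite hv1 ?(leq_trans (leqnSn n)) // /e.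
  by rewrite ifN ?mulr0 ?addr0 // neq_ltn ltnNge np orbT.
move=> p; rewrite Nv_lin; last 2 first.
- by exists n.
- by exists n.+1 => q hq; rewrite /e ifN // neq_ltn ltnNge hq orbT.
rewrite !mul1r mulrDr opprD addrACA hv2 /u2.
by rewrite subrK.
Qed.

End Solve.


Definition xg (g : expo l.+1 -> expo l -> nat -> R) : expo l.+1 -> nat -> R :=
  fun e => g e (expo0 l).

Definition RepP (d : expo l.+1) (Phi : expo l -> (expo l.+1 -> nat -> R) -> nat -> R) : Prop :=
 [/\ forall k a x y, findata x -> findata y ->
        Phi k (lin a x y) = (fun p => a * Phi k x p + Phi k y p),
     forall k x y, findata x -> findata y ->
        (forall e, on_diag m e -> expo_le e d -> x e = y e) -> Phi k x = Phi k y,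
     forall x, findata x -> exists n, forall k p,
        ((n <= p)%N -> Phi k x p = 0) /\ ((n < deg k)%N -> Phi k x p = 0)
   & forall g, is_solution m A g -> forall k, g d k = Phi k (xg g)].

Lemma Rep_lin d Phi : RepP d Phi -> forall k a x y, findata x -> findata y ->
        Phi k (lin a x y) = (fun p => a * Phi k x p + Phi k y p).
Proof. by case. Qed.
Lemma Rep_loc d Phi : RepP d Phi -> forall k x y, findata x -> findata y ->
        (forall e, on_diag m e -> expo_le e d -> x e = y e) -> Phi k x = Phi k y.
Proof. by case. Qed.
Lemma Rep_bd d Phi : RepP d Phi -> forall x, findata x -> exists n, forall k p,
        ((n <= p)%N -> Phi k x p = 0) /\ ((n < deg k)%N -> Phi k x p = 0).
Proof. by case. Qed.
Lemma Rep_sol d Phi : RepP d Phi ->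
   forall g, is_solution m A g -> forall k, g d k = Phi k (xg g).
Proof. by case. Qed.

Lemma expo_le_trans n (a b c : expo n) : expo_le a b -> expo_le b c -> expo_le a c.
Proof.
move=> /forallP ab /forallP bc; apply/forallP => i; exact: leq_trans (ab i) (bc i).
Qed.

Lemma deg_incr (k : expo l) (i : 'I_l) : deg (expo_incr k i) = (deg k).+1.
Proof.
rewrite /deg (eq_bigr (fun j => k j + (j == i))%N); last by move=> j _; rewrite ffunE.
rewrite big_split /=.
have -> : (\sum_(j < l) (j == i))%N = 1%N.
  rewrite (bigD1 i) //= eqxx big1 // => j /negPf ->; by [].
by rewrite addn1.
Qed.

Definition decr (k : expo l) (i : 'I_l) : expo l := [ffun j => (k j - (j == i))%N].

Lemma incr_decr (k : expo l) (i : 'I_l) : (0 < k i)%N -> expo_incr (decr k i) i = k.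
Proof.
move=> kp; apply/ffunP => j; rewrite !ffunE; case: eqP => [->|_]; last by rewrite !subn0 addn0.
by rewrite subn1 addn1 prednK.
Qed.

Lemma deg_decr (k : expo l) (i : 'I_l) : (0 < k i)%N -> deg (decr k i) = (deg k).-1.
Proof. by move=> kp; rewrite -{2}(incr_decr kp) deg_incr. Qed.

Lemma decr_i (k : expo l) (i : 'I_l) : (0 < k i)%N -> (decr k i i).+1 = k i.
Proof. by move=> kp; rewrite ffunE eqxx subn1 prednK. Qed.

Lemma deg0 (k : expo l) : deg k = 0%N -> k = expo0 l.
Proof.
move=> h; apply/ffunP => j; rewrite ffunE; move: h; rewrite /deg (bigD1 j) //=.
by move/eqP; rewrite addn_eq0 => /andP[/eqP].
Qed.

Section Step.
Variables (d : expo l.+1) (Phi : expo l.+1 -> expo l -> (expo l.+1 -> nat -> R) -> nat -> R).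
Hypothesis HPhi : forall d', expo_lt d' d -> RepP d' (Phi d').

Definition Dset := [set d' : expo l.+1 | expo_le d' d /\ d' != expo0 l.+1].

Lemma Dset_fin : finite_set Dset.
Proof. by apply: (sub_finite_set _ (fin_le d)) => e [] /=. Qed.

Lemma Dset_lt d' : Dset d' -> expo_lt (expo_sub d d') d.
Proof.
move=> [/forallP le0 ne0]; rewrite /expo_lt; apply/andP; split.
  by apply/forallP => i; rewrite ffunE leq_subr.
apply: contra ne0 => /eqP/ffunP H; apply/eqP/ffunP => i.
have := H i; have := le0 i; rewrite /expo0 !ffunE; move: (d' i) (d i) => a b; lia.
Qed.

Lemma Dset_le d' : Dset d' -> expo_le (expo_sub d d') d.
Proof. by move/Dset_lt => /andP[]. Qed.

Definition Y (i : 'I_l) (k : expo l) (x : expo l.+1 -> nat -> R) (p : nat) : R :=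
  \sum_(q \in [set: nat]) \sum_(d' \in Dset) A i p q d' * Phi (expo_sub d d') k x q.

Lemma Phi_bound x : findata x -> exists n, forall d', Dset d' -> forall k p,
  ((n <= p)%N -> Phi (expo_sub d d') k x p = 0) /\
  ((n < deg k)%N -> Phi (expo_sub d d') k x p = 0).
Proof.
move=> fx; apply: (@finite_bound _ _ (fun d' n => forall k p,
  ((n <= p)%N -> Phi (expo_sub d d') k x p = 0) /\
  ((n < deg k)%N -> Phi (expo_sub d d') k x p = 0))).
- exact: Dset_fin.
- move=> d' n n' nn' H k p; split => h; first by apply: (H k p).1; apply: leq_trans h.
  by apply: (H k p).2; apply: leq_trans h.
- move=> d' /Dset_lt/HPhi/Rep_bd H; exact: H.
Qed.

Lemma Y_bound x : findata x -> exists n, forall i k p,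
  ((n <= p)%N -> Y i k x p = 0) /\ ((n < deg k)%N -> Y i k x p = 0).
Proof.
move=> /Phi_bound [n Hn]; have [M HM] := colbound n.
exists (maxn n M) => i k p; split.
  rewrite geq_max => /andP[_ Mp].
  rewrite /Y (fsum_bound (n:=n)) ?big1 // => q.
    move=> _; apply: fsbig1 => d' _; rewrite HM ?mul0r //.
  move=> nq; apply: fsbig1 => d' Dd'; rewrite (Hn d' Dd' k q).1 ?mulr0 //.
rewrite gtn_max => /andP[nk _].
rewrite /Y fsbig1 // => q _; apply: fsbig1 => d' Dd'.
by rewrite (Hn d' Dd' k q).2 ?mulr0.
Qed.


Lemma Dsum (f : expo l.+1 -> R) :
  \sum_(d' \in Dset) f d' = \sum_(d' <- (finmap.enum_fset (fset_set Dset))) f d'.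
Proof. exact: fsbig_finite Dset_fin. Qed.

Lemma Dmem d' : d' \in (finmap.enum_fset (fset_set Dset)) -> Dset d'.
Proof. by rewrite in_fset_set ?inE //; exact: Dset_fin. Qed.

Lemma Y_lin i k a x y p : findata x -> findata y ->
  Y i k (lin a x y) p = a * Y i k x p + Y i k y p.
Proof.
move=> fx fy; have [n1 H1] := Phi_bound fx; have [n2 H2] := Phi_bound fy.
set n := maxn n1 n2.
have h1 d' q : Dset d' -> (n <= q)%N -> Phi (expo_sub d d') k x q = 0.
  by move=> Dd; rewrite geq_max => /andP[] hq _; apply: (H1 d' Dd k q).1.
have h2 d' q : Dset d' -> (n <= q)%N -> Phi (expo_sub d d') k y q = 0.
  by move=> Dd; rewrite geq_max => /andP[] _ hq; apply: (H2 d' Dd k q).1.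
have hl d' q : Dset d' -> Phi (expo_sub d d') k (lin a x y) q =
    a * Phi (expo_sub d d') k x q + Phi (expo_sub d d') k y q.
  by move=> Dd; rewrite (Rep_lin (HPhi (Dset_lt Dd)) k a fx fy).
rewrite /Y !(fsum_bound (n:=n)); first last; try (move=> q hq; apply: fsbig1 => d' Dd; rewrite ?hl // ?(h1 d' q) // ?(h2 d' q) // ?mulr0 ?addr0 ?mulr0 //; fail).
rewrite mulr_sumr -big_split; apply: eq_bigr => q _.
rewrite !Dsum mulr_sumr -big_split; apply: eq_big_seq => d' /Dmem Dd.
by rewrite hl // mulrDr mulrCA.
Qed.

Lemma Y_local i k x y p :
  (forall e, on_diag m e -> expo_le e d -> x e = y e) ->
  findata x -> findata y -> Y i k x p = Y i k y p.
Proof.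
move=> hxy fx fy; apply: eq_fsbigr => q _; apply: eq_fsbigr => d' /set_mem Dd.
rewrite (Rep_loc (HPhi (Dset_lt Dd)) k fx fy) // => e de le.
by apply: hxy => //; apply: expo_le_trans le (Dset_le Dd).
Qed.

Lemma findata_xg g : is_series g -> findata (xg g).
Proof. by move=> gs e; apply: (gs e).2. Qed.

Lemma SolEq g : is_solution m A g ->
  (forall d', expo_lt d' d -> forall k, g d' k = Phi d' k (xg g)) ->
  forall (i : 'I_l) (k : expo l) (p : nat),
    (k i).+1%:R * g d (expo_incr k i) p + wt R m i d * g d k p
     = Nv i (g d k) p + Y i k (xg g) p.
Proof.
move=> [gs geq] Hlow i k p; have := geq i d k p; rewrite /dser => ->.
have [n1 H1] := (gs d).2 k.
have [n2 H2] := Phi_bound (findata_xg gs).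
set n := maxn n1 n2.
have h1 q : (n <= q)%N -> g d k q = 0.
  by rewrite geq_max => /andP[] hq _; apply: H1.
have h2 d' q : Dset d' -> (n <= q)%N -> Phi (expo_sub d d') k (xg g) q = 0.
  by move=> Dd; rewrite geq_max => /andP[] _ hq; apply: (H2 d' Dd k q).1.
have e0 : expo_sub d (expo0 l.+1) = d by apply/ffunP => j; rewrite !ffunE subn0.
have eD : [set d' : expo l.+1 | expo_le d' d] `\ expo0 l.+1 = Dset.
  by apply/seteqP; split => e /= [h1' h2']; split => //; apply/eqP.
have inner q : \sum_(d' \in [set d'0 : expo l.+1 | expo_le d'0 d])
     A i p q d' * g (expo_sub d d') k q =
   A i p q (expo0 l.+1) * g d k q +
   \sum_(d' \in Dset) A i p q d' * Phi (expo_sub d d') k (xg g) q.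
  rewrite (fsbigD1 (expo0 l.+1)) ?e0 ?eD //; last 2 first.
  - exact: fin_le.
  - by apply/forallP => j; rewrite ffunE.
  congr (_ + _); apply: eq_fsbigr => d' /set_mem Dd.
  by rewrite (Hlow _ (Dset_lt Dd)).
rewrite /mxser /Nv /Y; under eq_fsbigr do rewrite inner.
rewrite !(fsum_bound (n:=n)); first last; try (move=> q hq; rewrite ?h1 ?mulr0 ?add0r //;
   apply: fsbig1 => d' Dd; rewrite (h2 d' q) ?mulr0 //; fail).
by rewrite big_split.
Qed.


Section OffDiag.
Variable i0 : 'I_l.
Let z : int := ((d (iwiden i0))%:Z - (m i0 * d ord_max)%N%:Z).
Hypothesis z0 : z != 0.

Definition Pspec (x : expo l.+1 -> nat -> R) (h : expo l -> nat -> R) : Prop :=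
  [/\ forall k, fin_vec (h k),
      exists J, forall k, (J < deg k)%N -> h k = (fun _ => 0)
    & forall (k : expo l) (p : nat), (k i0).+1%:R * h (expo_incr k i0) p + z%:~R * h k p
        = Nv i0 (h k) p + Y i0 k x p].

Lemma HZ (h : expo l -> nat -> R) : (forall k, fin_vec (h k)) ->
  (exists J, forall k, (J < deg k)%N -> h k = (fun _ => 0)) ->
  (forall (k : expo l) (p : nat), (k i0).+1%:R * h (expo_incr k i0) p + z%:~R * h k p = Nv i0 (h k) p) ->
  h = fun _ _ => 0.
Proof.
move=> fh [J HJ] He.
suff H t : forall k, (J < deg k + t)%N -> h k = (fun _ => 0).
  by apply: funext => k; apply: (H J.+1); rewrite addnS ltnS leq_addl.
elim: t => [|t IH] k hk; first by apply: HJ; rewrite addn0 in hk.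
have hi : h (expo_incr k i0) = (fun _ => 0).
  by apply: IH; rewrite deg_incr addSn -addnS.
apply: funext => p; apply: (@top_zero i0 z z0 (h k) 0) => // q _.
by have := He k q; rewrite hi mulr0 add0r => ->; rewrite subrr.
Qed.

Lemma Puniq x h1 h2 : Pspec x h1 -> Pspec x h2 -> h1 = h2.
Proof.
move=> [f1 [J1 HJ1] E1] [f2 [J2 HJ2] E2].
have H : (fun k p => (-1) * h2 k p + h1 k p) = fun _ _ => 0.
apply: HZ.
- by move=> k; apply: fin_lin.
- exists (maxn J1 J2) => k; rewrite gtn_max => /andP[k1 k2].
  by apply: funext => p; rewrite HJ1 // HJ2 // mulr0 addr0.
- move=> k p; rewrite Nv_lin //.
  have -> : (k i0).+1%:R * (-1 * h2 (expo_incr k i0) p + h1 (expo_incr k i0) p) +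
     z%:~R * (-1 * h2 k p + h1 k p) =
     ((k i0).+1%:R * h1 (expo_incr k i0) p + z%:~R * h1 k p) -
     ((k i0).+1%:R * h2 (expo_incr k i0) p + z%:~R * h2 k p) by ring.
  rewrite E1 E2; ring.
apply: funext => k; apply: funext => p.
have := congr1 (fun f => f k p) H => /= /eqP.
by rewrite mulN1r addrC subr_eq0 => /eqP.
Qed.


Fixpoint itf (S : (nat -> R) -> nat -> R) (Yf : expo l -> nat -> R) (n t : nat)
    (k : expo l) {struct t} : nat -> R :=
  match t with
  | 0 => fun _ => 0
  | t'.+1 => if (n < deg k)%N then (fun _ => 0)
             else S (fun p => Yf k p - (k i0).+1%:R * itf S Yf n t' (expo_incr k i0) p)
  end.

Lemma Pexist x : findata x -> exists h, Pspec x h /\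
  exists B, forall k p, (B <= p)%N -> h k p = 0.
Proof.
move=> fx; have [n Hn] := Y_bound fx.
have Hex : forall u : nat -> R, exists v : nat -> R,
    (forall p, (n <= p)%N -> u p = 0) ->
    (forall p, (n <= p)%N -> v p = 0) /\ forall p, z%:~R * v p - Nv i0 v p = u p.
  move=> u; case: (pselect (forall p, (n <= p)%N -> u p = 0)) => hu.
    by have [v hv] := @solve i0 z z0 n u hu; exists v.
  by exists u.
have [S HS] := choice Hex.
pose Yf := fun k p => Y i0 k x p.
pose f := itf S Yf n.
have fb t : forall k p, (n <= p)%N -> f t k p = 0.
  elim: t => [//|t IH] k p np /=.
  rewrite /f /=; case: ifP => // _.
  have hu : forall q, (n <= q)%N -> Yf k q - (k i0).+1%:R * f t (expo_incr k i0) q = 0.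
    by move=> q nq; rewrite /Yf (Hn i0 k q).1 // IH // mulr0 subrr.
  exact: (HS _ hu).1.
have fS t k : f t.+1 k = if (n < deg k)%N then (fun _ => 0)
    else S (fun p => Yf k p - (k i0).+1%:R * f t (expo_incr k i0) p) by [].
have fz t k : (n < deg k)%N -> f t k = (fun _ => 0).
  by case: t => [//|t] nk; rewrite /f /= nk.
have fs t : forall k, (n < deg k + t)%N -> f t.+1 k = f t k.
  elim: t => [|t IH] k hk.
    by rewrite addn0 in hk; rewrite (fz 1%N) ?(fz 0%N).
  rewrite [f t.+2 k]fS [f t.+1 k]fS; case: ifP => // _.
  by rewrite IH // deg_incr addSn -addnS.
exists (f n.+1); split; last by exists n; apply: fb.
split.
- by move=> k; exists n; apply: fb.
- by exists n => k; apply: fz.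
move=> k p; case: (ltnP n (deg k)) => nk.
  have nk' : (n < deg (expo_incr k i0))%N by rewrite deg_incr; exact: ltnW.
  rewrite (fz _ k nk) (fz _ _ nk') (Hn i0 k p).2 // !mulr0 addr0.
  by rewrite addr0 (@Nv_supp i0 _ 0).
have E : f n.+1 k = S (fun p => Yf k p - (k i0).+1%:R * f n.+1 (expo_incr k i0) p).
  rewrite fS ltnNge nk /= (fs n) // deg_incr addSn.
  by rewrite ltnS leq_addl.
have hu : forall p, (n <= p)%N -> Yf k p - (k i0).+1%:R * f n.+1 (expo_incr k i0) p = 0.
  by move=> q nq; rewrite /Yf (Hn i0 k q).1 // fb // mulr0 subrr.
have [_ H2] := HS _ hu.
rewrite E; have := H2 p.
move: (S _) => v; rewrite /Yf.
move: (Nv i0 v p) (Y i0 k x p) (f n.+1 (expo_incr k i0) p) (v p) => a b c e H.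
have -> : z%:~R * e = (z%:~R * e - a) + a by ring.
rewrite H; ring.
Qed.


Lemma Pspec_sol g : is_solution m A g -> Pspec (xg g) (g d).
Proof.
move=> gsol; have [gs _] := gsol.
split.
- by move=> k; apply: (gs d).2.
- have [J HJ] : exists J, forall k, [set k | exists p, g d k p != 0] k -> (deg k <= J)%N.
    apply: (@finite_bound _ _ (fun k n => (deg k <= n)%N)).
    + exact: (gs d).1.
    + by move=> k n n' nn' h; apply: leq_trans h nn'.
    + by move=> k _; exists (deg k).
  exists J => k Jk; apply: funext => p; apply/eqP; apply: contraT => hp; exfalso.
  by have := HJ k (ex_intro _ p hp); rewrite leqNgt Jk.
- move=> k p; apply: (SolEq gsol) => d' lt k'.
  exact: (Rep_sol (HPhi lt) gsol).
Qed.

Lemma rep_off : exists Phi0, RepP d Phi0.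
Proof.
have Hex : forall x, exists h, findata x ->
    Pspec x h /\ exists B, forall k p, (B <= p)%N -> h k p = 0.
  move=> x; case: (pselect (findata x)) => fx.
    by have [h hh] := Pexist fx; exists h.
  by exists (fun _ _ => 0).
have [Hc HHc] := choice Hex.
exists (fun k x => Hc x k); split.
- move=> k a x y fx fy.
  have [[f1 [J1 HJ1] E1] _] := HHc x fx.
  have [[f2 [J2 HJ2] E2] _] := HHc y fy.
  suff -> : Hc (lin a x y) = fun k p => a * Hc x k p + Hc y k p by [].
  apply: Puniq (HHc _ (findata_lin a fx fy)).1 _.
  split.
  + by move=> k'; apply: fin_lin.
  + exists (maxn J1 J2) => k'; rewrite gtn_max => /andP[k1 k2].
    by apply: funext => p; rewrite HJ1 // HJ2 // mulr0 addr0.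
  + move=> k' p; rewrite Nv_lin // Y_lin //.
    have := E1 k' p; have := E2 k' p.
    move: (Hc x (expo_incr k' i0) p) (Hc y (expo_incr k' i0) p) (Hc x k' p) (Hc y k' p).
    move: (Nv i0 (Hc x k') p) (Nv i0 (Hc y k') p) (Y i0 k' x p) (Y i0 k' y p).
    move=> N1 N2 Y1 Y2 X1' X2' X1 X2 e2 e1.
    have -> : (k' i0).+1%:R * (a * X1' + X2') + z%:~R * (a * X1 + X2) =
      a * ((k' i0).+1%:R * X1' + z%:~R * X1) + ((k' i0).+1%:R * X2' + z%:~R * X2) by ring.
    rewrite e1 e2; ring.
- move=> k x y fx fy hxy.
  suff -> : Hc x = Hc y by [].
  apply: Puniq (HHc _ fx).1 _.
  have [[f2 J2 E2] _] := HHc y fy.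
  split => // k' p; rewrite E2; congr (_ + _).
  by apply: Y_local => // e de le; rewrite hxy.
- move=> x fx; have [[_ [J HJ] _] [B HB]] := HHc x fx.
  exists (maxn B J) => k p; split.
    by rewrite geq_max => /andP[h _]; apply: HB.
  by rewrite gtn_max => /andP[_ h]; rewrite HJ.
- move=> g gsol k.
  suff -> : g d = Hc (xg g) by [].
  apply: Puniq (Pspec_sol gsol) (HHc _ _).1.
  by apply: findata_xg; case: gsol.
Qed.

End OffDiag.


Section Diag.
Variable i00 : 'I_l.
Hypothesis hdiag : on_diag m d.

Definition dir (k : expo l) : 'I_l := odflt i00 [pick i | (0 < k i)%N].

Lemma dir_pos (k : expo l) : (0 < deg k)%N -> (0 < k (dir k))%N.
Proof.
rewrite /dir; case: pickP => [i //|H] /=.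
suff -> : deg k = 0%N by [].
by rewrite /deg big1 // => i _; have := H i; rewrite lt0n => /negbFE/eqP.
Qed.

Lemma wt_diag i : wt R m i d = 0.
Proof. by rewrite /wt (eqP (forallP hdiag i)) subrr. Qed.

Fixpoint Hd (x : expo l.+1 -> nat -> R) (t : nat) (k : expo l) : nat -> R :=
  match t with
  | 0 => x d
  | t'.+1 => fun p => (((k (dir k))%:R : F)^-1) *:
        (Nv (dir k) (Hd x t' (decr k (dir k))) p + Y (dir k) (decr k (dir k)) x p)
  end.

Lemma HdS x t k : Hd x t.+1 k = fun p => (((k (dir k))%:R : F)^-1) *:
        (Nv (dir k) (Hd x t (decr k (dir k))) p + Y (dir k) (decr k (dir k)) x p).
Proof. by []. Qed.

Lemma Hd_bound x : findata x -> exists n, forall t k p, (n <= p)%N -> Hd x t k p = 0.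
Proof.
move=> fx; have [nY HY] := Y_bound fx; have [nx Hx] := fx d.
exists (maxn nY nx); elim => [|t IH] k p; rewrite geq_max => /andP[h1 h2] /=.
  exact: Hx.
rewrite (HY _ _ _).1 // (@Nv_supp _ _ (maxn nY nx)) ?addr0 ?scaler0 //.
- by move=> q hq; apply: IH.
- by rewrite leqW // geq_max h1 h2.
Qed.

Lemma Hd_fin x t k : findata x -> fin_vec (Hd x t k).
Proof. by move=> fx; have [n Hn] := Hd_bound fx; exists n => p; apply: Hn. Qed.

Lemma Hd_ev x : findata x -> exists J, forall k p, (J < deg k)%N -> Hd x (deg k) k p = 0.
Proof.
move=> fx; have [n Hn] := Hd_bound fx; have [nY HY] := Y_bound fx.
have H s : forall k p, deg k = (nY.+1 + s)%N -> (n - s <= p)%N -> Hd x (deg k) k p = 0.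
  elim: s => [|s IH] k p hk hp; first by apply: Hn; rewrite subn0 in hp.
  have kp : (0 < k (dir k))%N by apply: dir_pos; rewrite hk addnS.
  have hd : deg (decr k (dir k)) = (nY.+1 + s)%N by rewrite deg_decr // hk addnS.
  rewrite hk addnS HdS (HY _ _ _).2; last by rewrite hd ltnS leq_addr.
  rewrite addr0 (@Nv_supp _ _ (n - s)) ?scaler0 //.
    by move=> q hq; rewrite -hd; apply: IH.
  lia.
exists (nY + n)%N => k p hk.
have hk' : deg k = (nY.+1 + (deg k - nY.+1))%N by rewrite subnKC //; lia.
by apply: (H (deg k - nY.+1)%N) => //; lia.
Qed.


Lemma Hd_lin a x y : findata x -> findata y -> forall t k,
  Hd (lin a x y) t k = fun p => a * Hd x t k p + Hd y t k p.
Proof.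
move=> fx fy; elim => [//|t IH] k; rewrite !HdS; apply: funext => p.
rewrite IH Nv_lin; try exact: Hd_fin. rewrite (Y_lin (dir k) (decr k (dir k)) a p fx fy).
rewrite -scalerAr -scalerDr; congr (_ *: _); ring.
Qed.

Lemma Hd_loc x y : findata x -> findata y ->
  (forall e, on_diag m e -> expo_le e d -> x e = y e) ->
  forall t k, Hd x t k = Hd y t k.
Proof.
move=> fx fy hxy; elim => [|t IH] k.
  by apply: hxy => //; apply/forallP => j.
rewrite !HdS IH; apply: funext => p; congr (_ *: (_ + _)).
exact: Y_local.
Qed.

Lemma Hd_sol g : is_solution m A g ->
  forall t k, deg k = t -> g d k = Hd (xg g) t k.
Proof.
move=> gsol; elim => [|t IH] k hk; first by rewrite (deg0 hk).
have kp : (0 < k (dir k))%N by apply: dir_pos; rewrite hk.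
rewrite HdS; apply: funext => p.
have := SolEq gsol (fun d' lt k' => Rep_sol (HPhi lt) gsol k') (dir k) (decr k (dir k)) p.
rewrite wt_diag mul0r addr0 incr_decr // decr_i // => E.
rewrite -IH; last by rewrite deg_decr // hk.
by rewrite -E nat_inv.
Qed.

Lemma rep_diag : exists Phi0, RepP d Phi0.
Proof.
exists (fun k x => Hd x (deg k) k); split.
- by move=> k a x y fx fy; apply: Hd_lin.
- by move=> k x y fx fy hxy; apply: Hd_loc.
- move=> x fx; have [n Hn] := Hd_bound fx; have [J HJ] := Hd_ev fx.
  exists (maxn n J) => k p; split.
    by rewrite geq_max => /andP[h _]; apply: Hn.
  by rewrite gtn_max => /andP[_ h]; apply: HJ.
- by move=> g gsol k; apply: Hd_sol.
Qed.

End Diag.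

End Step.

Lemma deg_lt n (d' d : expo n) : expo_lt d' d -> (deg d' < deg d)%N.
Proof.
move=> /andP[/forallP le ne].
have [i hi] : exists i, d' i != d i.
  apply/existsP; apply: contraR ne; rewrite negb_exists => /forallP H.
  by apply/eqP/ffunP => i; apply/eqP; have := H i; rewrite negbK.
have lt : (d' i < d i)%N by rewrite ltn_neqAle hi le.
rewrite /deg (bigD1 i) //= [X in (_ < X)%N](bigD1 i) //=.
have : (\sum_(j < n | j != i) d' j <= \sum_(j < n | j != i) d j)%N.
  by apply: leq_sum => j _; apply: le.
by move=> h; rewrite -addSn leq_add.
Qed.

Lemma rep_all (i00 : 'I_l) : forall d, exists Phi, RepP d Phi.
Proof.
suff H n : forall d, (deg d <= n)%N -> exists Phi, RepP d Phi.
  by move=> d; apply: (H (deg d)).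
elim: n => [|n IH] d hd.
- have Hex : forall d', exists Phi, expo_lt d' d -> RepP d' Phi.
    move=> d'; exists (fun _ _ _ => 0) => lt.
    by have := deg_lt lt; rewrite ltnNge (leq_trans hd (leq0n _)).
  have [Phi HPhi] := choice Hex.
  case: (boolP (on_diag m d)) => hdg; first exact: (rep_diag HPhi i00 hdg).
  move/forallPn: hdg => [i hi]; apply: (rep_off HPhi (i0 := i)).
  by rewrite subr_eq0 eqz_nat.
- have Hex : forall d', exists Phi, expo_lt d' d -> RepP d' Phi.
    move=> d'; case: (pselect (expo_lt d' d)) => lt.
      have [Phi HP] := IH d' (leq_trans (deg_lt lt) hd); by exists Phi.
    by exists (fun _ _ _ => 0).
  have [Phi HPhi] := choice Hex.
  case: (boolP (on_diag m d)) => hdg; first exact: (rep_diag HPhi i00 hdg).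
  move/forallPn: hdg => [i hi]; apply: (rep_off HPhi (i0 := i)).
  by rewrite subr_eq0 eqz_nat.
Qed.

Lemma findata_sum (T : Type) (s : seq T) (c : T -> R) (D : T -> expo l.+1 -> nat -> R) :
  (forall j, findata (D j)) -> findata (fun e p => \sum_(j <- s) c j * D j e p).
Proof.
move=> fD; elim: s => [|a s IH] e.
  by exists 0%N => p _; rewrite big_nil.
have [n H] := fin_lin (c a) (fD a e) (IH e).
by exists n => p hp; rewrite big_cons; exact: H p hp.
Qed.

Lemma Phi_zero d Phi k : RepP d Phi -> Phi k (fun _ _ => 0) = fun _ => 0.
Proof.
move=> HP; have f0 : findata (fun _ _ => (0 : R)) by move=> e; exists 0%N.
have := Rep_lin HP k 1 f0 f0.
have -> : lin 1 (fun _ _ => 0) (fun _ _ => 0) = (fun _ _ => (0 : R)).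
  by apply: funext => e; apply: funext => p; rewrite /lin mulr0 addr0.
move=> H; apply: funext => p; have := congr1 (fun f => f p) H => /= E.
rewrite mul1r in E; apply: (@addrI _ (Phi k (fun _ _ => 0) p)).
by rewrite addr0 -E.
Qed.

Lemma Phi_sum d Phi k (T : Type) (s : seq T) (c : T -> R) (D : T -> expo l.+1 -> nat -> R) :
  RepP d Phi -> (forall j, findata (D j)) ->
  Phi k (fun e p => \sum_(j <- s) c j * D j e p) = fun p => \sum_(j <- s) c j * Phi k (D j) p.
Proof.
move=> HP fD; elim: s => [|a s IH].
  have -> : (fun (e : expo l.+1) (p : nat) => \sum_(j <- [::]) c j * D j e p) = (fun _ _ => 0).
    by apply: funext => e; apply: funext => p; rewrite big_nil.
  by rewrite (Phi_zero k HP); apply: funext => p; rewrite big_nil.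
have -> : (fun e p => \sum_(j <- a :: s) c j * D j e p) =
    lin (c a) (D a) (fun e p => \sum_(j <- s) c j * D j e p).
  by apply: funext => e; apply: funext => p; rewrite big_cons.
rewrite (Rep_lin HP k (c a) (fD a) (findata_sum s c fD)) IH.
by apply: funext => p; rewrite big_cons.
Qed.

Definition Ebas (e : expo l.+1) (r : nat) : expo l.+1 -> nat -> R :=
  fun e' p => if (e' == e) && (p == r) then 1 else 0.

Lemma findata_Ebas e r : findata (Ebas e r).
Proof.
move=> e'; exists r.+1 => p hp; rewrite /Ebas.
by case: (e' == e) => //=; rewrite ifN // neq_ltn hp orbT.
Qed.

Lemma final (i00 : 'I_l) :
  (forall g1 g2, is_solution m A g1 -> is_solution m A g2 ->
     (forall d p, on_diag m d -> g1 d (expo0 l) p = g2 d (expo0 l) p) ->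
     forall d k p, g1 d k p = g2 d k p) /\
  (forall (d : expo l.+1) (k : expo l),
     exists (C0 : nat -> nat -> R) (N : nat) (C : 'I_N -> nat -> nat -> R)
            (dd : 'I_N -> expo l.+1) (kk : 'I_N -> expo l),
       colfin_mx C0 /\ (forall j, colfin_mx (C j)) /\
       (forall j, expo_lt (dd j) d) /\
       forall g, is_solution m A g -> forall p,
         g d k p = (if on_diag m d then mxv C0 (g d (expo0 l)) p else 0)
                   + \sum_(j < N) mxv (C j) (g (dd j) (kk j)) p).
Proof.
split.
  move=> g1 g2 s1 s2 h d k p; have [Phi HP] := rep_all i00 d.
  have f1 := findata_xg (proj1 s1); have f2 := findata_xg (proj1 s2).
  rewrite (Rep_sol HP s1) (Rep_sol HP s2) (Rep_loc HP k f1 f2) // => e de _.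
  by apply: funext => q; apply: h.
move=> d k; have [Phi HP] := rep_all i00 d.
pose S := [set e : expo l.+1 | on_diag m e /\ expo_le e d].
have finS : finite_set S by apply: (sub_finite_set _ (fin_le d)) => e [].
pose Cm e : nat -> nat -> R := fun p r => Phi k (Ebas e r) p.
have cf e : colfin_mx (Cm e).
  move=> r; have [n Hn] := Rep_bd HP (findata_Ebas e r).
  by exists n => p hp; apply: (Hn k p).1.
have key g : is_solution m A g -> forall p,
    g d k p = \sum_(e \in S) mxv (Cm e) (g e (expo0 l)) p.
  move=> gsol p; have fx := findata_xg (proj1 gsol).
  pose x := xg g.
  have [n Hn] : exists n, forall e, S e -> forall r, (n <= r)%N -> x e r = 0.
    apply: (@finite_bound _ _ (fun e n => forall r, (n <= r)%N -> x e r = 0)) => //.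
    - by move=> e n n' nn' H r hr; apply: H; apply: leq_trans hr.
    - by move=> e _; apply: fx.
  pose sS := finmap.enum_fset (fset_set S).
  have memS e : e \in sS -> S e by rewrite in_fset_set // inE.
  have Smem e : S e -> e \in sS by move=> Se; rewrite in_fset_set // inE.
  pose Din e : expo l.+1 -> nat -> R := fun e' q => \sum_(0 <= r < n) x e r * Ebas e r e' q.
  pose x' : expo l.+1 -> nat -> R := fun e' q => \sum_(e <- sS) 1 * Din e e' q.
  have fDin e : findata (Din e) by apply: findata_sum => r; apply: findata_Ebas.
  have fx' : findata x' by apply: findata_sum.
  rewrite (Rep_sol HP gsol) -/x (Rep_loc HP k fx fx'); last first.
    move=> e' de' le'; have Se' : S e' by split.
    apply: funext => q; rewrite /x' (bigD1_seq e') ?finmap.fset_uniq ?Smem //=.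
    rewrite big1_seq ?addr0; last first.
      move=> e /andP[ne _]; rewrite mul1r /Din big1 // => r _.
      by rewrite /Ebas eq_sym (negPf ne) mulr0.
    rewrite mul1r /Din big_mkord -(@fsum_bound _ (fun r => x e' r * Ebas e' r e' q) n).
      rewrite (@fsum_single _ _ q) /Ebas ?eqxx ?mulr1 // => r /negPf.
      by rewrite eq_sym => ->; rewrite andbF mulr0.
    by move=> r hr; rewrite Hn // mul0r.
  rewrite /x' (Phi_sum k sS (fun=> 1) HP fDin) (fsbig_finite _ _ finS) -/sS.
  apply: eq_big_seq => e /memS Se; rewrite mul1r.
  rewrite /Din (Phi_sum k _ _ HP (fun r => findata_Ebas e r)).
  rewrite /mxv (@fsum_bound _ _ n); last by move=> r hr; have := Hn e Se r hr; rewrite /x /xg => ->; rewrite mulr0.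
  by rewrite big_mkord; apply: eq_bigr => r _; rewrite mulrC.
have finS' : finite_set (S `\ d) by apply: finite_setD.
pose s := finmap.enum_fset (fset_set (S `\ d)).
exists (Cm d), (size s), (fun j => Cm (nth d s j)), (fun j => nth d s j), (fun _ => expo0 l).
split; first exact: cf.
split; first by move=> j; apply: cf.
split.
  move=> j; have : nth d s j \in s by apply: mem_nth.
  rewrite in_fset_set // inE => -[[dg le] ne].
  by apply/andP; split => //; apply/eqP.
move=> g gsol p; rewrite (key g gsol p).
have -> : \sum_(e \in S) mxv (Cm e) (g e (expo0 l)) p =
    (if on_diag m d then mxv (Cm d) (g d (expo0 l)) p else 0) +
    \sum_(e \in S `\ d) mxv (Cm e) (g e (expo0 l)) p.
  case: ifP => hd.
    rewrite (fsbigD1 d) //; split => //; exact/forallP.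
  rewrite add0r; congr (\sum_(e \in _) _); apply/seteqP; split => e.
    by move=> Se; split => // /= ed; move: Se; rewrite ed => -[]; rewrite hd.
  by case.
rewrite (fsbig_finite _ _ finS') -/s (big_nth d) big_mkord.
by [].
Qed.

End Main.

End Aux.
Import Aux.

Theorem proposition6p1 (F : realType) (R : comAlgType F) (l : nat) (m : 'I_l -> nat)
  (A : 'I_l -> nat -> nat -> expo l.+1 -> R) :
  (0 < l)%N ->
  (forall i, (0 < m i)%N) ->
  (forall i, epoly_mx (A i)) ->
  (* a) *)
  (forall i j p r d, emx_mul (A i) (A j) p r d = emx_mul (A j) (A i) p r d) ->
  (* b) *)
  (forall i j p q d, dmx m i (A j) p q d = dmx m j (A i) p q d) ->
  (* c) *)
  (forall i, exists (A' : nat -> nat -> expo l.+1 -> R) (A'' : nat -> nat -> R),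
      epoly_mx A' /\ colfin_mx A'' /\
      (forall p q d, A i p q d = A' p q d + (if d == expo0 l.+1 then A'' p q else 0)) /\
      (forall p q d, (p <= q)%N -> A' p q d = 0) /\
      (forall p q d, A' p q d != 0 -> wt R m i d != 0) /\
      (forall p q, (q <= p)%N -> A'' p q = 0)) ->
  (* uniqueness *)
  (forall g1 g2, is_solution m A g1 -> is_solution m A g2 ->
     (forall d p, on_diag m d -> g1 d (expo0 l) p = g2 d (expo0 l) p) ->
     forall d k p, g1 d k p = g2 d k p) /\
  (* recurrence relations, R-linear in coefficients *)
  (forall (d : expo l.+1) (k : expo l),
     exists (C0 : nat -> nat -> R) (N : nat) (C : 'I_N -> nat -> nat -> R)
            (dd : 'I_N -> expo l.+1) (kk : 'I_N -> expo l),
       colfin_mx C0 /\ (forall j, colfin_mx (C j)) /\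
       (forall j, expo_lt (dd j) d) /\
       forall g, is_solution m A g -> forall p,
         g d k p = (if on_diag m d then mxv C0 (g d (expo0 l)) p else 0)
                   + \sum_(j < N) mxv (C j) (g (dd j) (kk j)) p).
Proof.
move=> hl hm hep ha hb hc.
have Nup : forall i p q, (q <= p)%N -> A i p q (expo0 l.+1) = 0.
  move=> i p q qp; have [A' [A'' [_ [_ [eA [_ [hw hA'']]]]]]] := hc i.
  rewrite eA eqxx hA'' // addr0; apply/eqP; apply: contraT => nz.
  by have := hw _ _ _ nz; rewrite /wt !ffunE muln0 subrr eqxx.
exact: (@final F R l m A hep Nup (Ordinal hl)).
Qed.
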